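(* For every fixed $j\in[0,1]$, the function $c\mapsto g_c(j)$ is increasing on $c>0$, where $$g_c(j)=4\int_0^{c\sqrt{1-j^2}}\frac{\sqrt{(c^2(1-j^2)-z^2)(c^4+(1-c^2)z^2)}}{c(c^2-z^2)}\,dz.$$ Consequently, for $c_1<c_2$ one has $\mathbb{X}_{\Omega_{c_1}}\subset\mathbb{X}_{\Omega_{c_2}}$.
   Context: $\Omega_c\subset\mathbb{R}^2_{\ge0}$ is the relatively open region bounded by the coordinate axes and the curve $(g_c(j),g_c(j)+2\pi j)$, $0\le j\le1$, together with $(g_c(-j)-2\pi j,g_c(-j))$, $-1\le j\le0$. $\mathbb{X}_\Omega=\{(z_1,z_2)\in\mathbb{C}^2:(\pi|z_1|^2,\pi|z_2|^2)\in\Omega\}$. *)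

(* Defs.v *)
From HB Require Import structures.
From mathcomp Require Import all_boot all_order all_algebra.
From mathcomp Require Import all_classical all_reals all_analysis.
From mathcomp Require Import complex.
Set Implicit Arguments. Unset Strict Implicit. Unset Printing Implicit Defensive.
Import Order.TTheory GRing.Theory Num.Theory.
Local Open Scope classical_set_scope.
Local Open Scope ring_scope.

(* g_c(j) = 4 \int_0^{c sqrt(1-j^2)} sqrt((c^2(1-j^2)-z^2)(c^4+(1-c^2)z^2)) / (c(c^2-z^2)) dz,
   taken as a Lebesgue integral (the integrand is unbounded near z = c when j = 0,
   so this is an improper Riemann integral; the Lebesgue integral agrees). *)
Definition gfun (R : realType) (c j : R) : R :=
  4 * Rintegral (@lebesgue_measure R) `[0, c * Num.sqrt (1 - j ^+ 2)]
      (fun z => Num.sqrt ((c ^+ 2 * (1 - j ^+ 2) - z ^+ 2) * (c ^+ 4 + (1 - c ^+ 2) * z ^+ 2))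
                / (c * (c ^+ 2 - z ^+ 2))).

Definition curve (R : realType) (c j : R) : R * R :=
  if 0 <= j then (gfun c j, gfun c j + 2 * pi * j)
  else (gfun c (- j) - 2 * pi * j, gfun c (- j)).

(* Omega_c: the relatively open region of R^2_{>=0} bounded by the coordinate axes
   and the curve.  Each diagonal line {y - x = 2 pi j}, j in [-1,1], meets the curve
   exactly at curve c j; the region consists of the points of R^2_{>=0} lying on such
   a line strictly below (south-west of) the curve point. *)
Definition Omega (R : realType) (c : R) : set (R * R) :=
  [set p | 0 <= p.1 /\ 0 <= p.2 /\
           exists j, -1 <= j <= 1 /\ exists t, 0 < t /\
             p = ((curve c j).1 - t, (curve c j).2 - t)].

Definition normsqC (R : realType) (z : R[i]) : R := let: Complex a b := z in a ^+ 2 + b ^+ 2.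

Definition XOmega (R : realType) (O : set (R * R)) : set (R[i] * R[i]) :=
  [set z | O (pi * normsqC z.1, pi * normsqC z.2)].

(* Main.v *)
Require Import Defs.
From HB Require Import structures.
From mathcomp Require Import all_boot all_order all_algebra.
From mathcomp Require Import all_classical all_reals all_analysis.
From mathcomp Require Import measurable_realfun lebesgue_measure lebesgue_integral ftc.
From mathcomp Require Import ring lra.
From mathcomp Require Import complex.
Import Order.TTheory GRing.Theory Num.Theory.
Local Open Scope classical_set_scope.
Local Open Scope ring_scope.

Section S.
Context {R : realType}.
Local Notation mu := (@lebesgue_measure R).

Lemma measurable_inv : measurable_fun [set: R] (@GRing.inv R).
Proof.
have -> : [set: R] = ~` [set 0] `|` [set 0].
  by rewrite setUC setUCr.
apply/measurable_funU => //.
- by apply: measurableC.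
split; last exact: measurable_fun_set1.
apply: open_continuous_measurable_fun.
  by rewrite openC; exact/accessible_closed_set1/hausdorff_accessible/Rhausdorff.
move=> x; rewrite inE /= => /eqP x0; exact: inv_continuous.
Qed.

Lemma scale_preimage (c a b : R) : 0 < c ->
  ( *%R c) @^-1` `]a, b]%classic = `]a / c, b / c]%classic.
Proof.
move=> c0; apply/seteqP; split => x /=; rewrite !in_itv /=.
  by move=> /andP[ax xb]; rewrite ltr_pdivrMr // lter_pdivlMr // ![x * c]mulrC ax xb.
by move=> /andP[ax xb]; rewrite -ltr_pdivrMl // -ler_pdivlMl // ![c^-1 * _]mulrC ax xb.
Qed.

Lemma mphi (c : R) : measurable_fun [set: R] (fun s : R => c * s).
Proof. exact: measurable_funM. Qed.

Lemma scale_lebesgue (c : R) (c0 : 0 < c) (A : set R) : measurable A ->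
  mu A = (c%:E * pushforward mu (( *%R c) : _ -> measurableTypeR R) A)%E.
Proof.
move=> mA.
have := (@lebesgue_measure_unique R (mscale (NngNum (ltW c0)) (pushforward mu (( *%R c) : _ -> measurableTypeR R)))); apply => //= _ [[a b]] _ <-.
rewrite /mscale /pushforward /=.
unfold pushforward; rewrite scale_preimage //.
rewrite !lebesgue_measure_itv /= !lte_fin ltr_pM2r ?invr_gt0 //.
case: ifPn => ab //; last by rewrite mule0.
rewrite -!EFinB -EFinM; congr EFin.
by rewrite -mulrBl mulrCA divff ?gt_eqF // mulr1.
Qed.
Lemma scale_preimage_cc (c b : R) : 0 < c ->
  ( *%R c) @^-1` `[0, c * b]%classic = `[0, b]%classic.
Proof.
move=> c0; apply/seteqP; split => x /=; rewrite !in_itv /=.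
  by rewrite pmulr_rge0 // ler_pM2l.
by rewrite pmulr_rge0 // ler_pM2l.
Qed.

Lemma integral_scale (c b : R) (f : R -> R) : 0 < c ->
  measurable_fun [set: R] f -> (forall x, 0 <= x <= c * b -> 0 <= f x) ->
  (\int[mu]_(z in `[0%R, (c * b)%R]) (f z)%:E =
   c%:E * \int[mu]_(s in `[0%R, b]) (f (c * s))%:E)%E.
Proof.
move=> c0 mf f0.
have mfE : measurable_fun `[0, c * b]%classic (EFin \o f).
  by apply/measurable_EFinP; exact: measurable_funTS.
have f0E : forall x, `[0, c * b]%classic x -> (0 <= (f x)%:E)%E.
  by move=> x /=; rewrite in_itv /= lee_fin => /f0.
apply: (@eq_trans _ _ (\int[mscale (NngNum (ltW c0)) (pushforward mu (( *%R c) : _ -> measurableTypeR R))]_(z in `[0%R, (c * b)%R]) (f z)%:E)%E).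
  apply: eq_measure_integral => A mA _; exact: scale_lebesgue.
rewrite ge0_integral_mscale //=; congr (_ * _)%E.
rewrite ge0_integral_pushforward //; last by move=> x /[!inE]; exact: f0E.
by rewrite scale_preimage_cc.
Qed.
Definition Fc (c j z : R) : R :=
  Num.sqrt ((c ^+ 2 * (1 - j ^+ 2) - z ^+ 2) * (c ^+ 4 + (1 - c ^+ 2) * z ^+ 2))
                / (c * (c ^+ 2 - z ^+ 2)).

Lemma Fc_scale (c j s : R) : 0 < c ->
  c * Fc c j (c * s) =
  Num.sqrt ((1 - j ^+ 2 - s ^+ 2) * (c ^+ 2 * (1 - s ^+ 2) + s ^+ 2)) / (1 - s ^+ 2).
Proof.
move=> c0; rewrite /Fc.
have -> : (c ^+ 2 * (1 - j ^+ 2) - (c * s) ^+ 2) * (c ^+ 4 + (1 - c ^+ 2) * (c * s) ^+ 2)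
   = (c ^+ 2) ^+ 2 * ((1 - j ^+ 2 - s ^+ 2) * (c ^+ 2 * (1 - s ^+ 2) + s ^+ 2)) by ring.
rewrite sqrtrM ?exprn_ge0 ?sqrtr_sqr ?ger0_norm ?exprn_ge0 ?ltW //.
have -> : c * (c ^+ 2 - (c * s) ^+ 2) = c ^+ 3 * (1 - s ^+ 2) by ring.
rewrite invfM.
move: (Num.sqrt _) (_ ^-1 : R) => X Y.
have cn0 : c != 0 by rewrite gt_eqF.
by field.
Qed.

Lemma mFc (c j : R) : measurable_fun [set: R] (Fc c j).
Proof.
have mX : measurable_fun [set: R] (fun x : R => x ^+ 2) by [].
have mA (k : R) : measurable_fun [set: R] (fun x : R => k - x ^+ 2).
  exact (measurable_funB (f := fun _ : R => k) (g := fun x : R => x ^+ 2) (measurable_cst k) mX).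
have mB (k l : R) : measurable_fun [set: R] (fun x : R => k + l * x ^+ 2).
  exact (measurable_funD (f := fun _ : R => k) (g := fun x : R => l * x ^+ 2) (measurable_cst k)
    (measurable_funM (f := fun _ : R => l) (g := fun x : R => x ^+ 2) (measurable_cst l) mX)).
have mP : measurable_fun [set: R] (fun z : R => (c ^+ 2 * (1 - j ^+ 2) - z ^+ 2) * (c ^+ 4 + (1 - c ^+ 2) * z ^+ 2)).
  exact (measurable_funM (mA _) (mB _ _)).
have mQ : measurable_fun [set: R] (fun z : R => c * (c ^+ 2 - z ^+ 2)).
  exact (measurable_funM (f := fun _ : R => c) (g := fun z : R => c ^+ 2 - z ^+ 2) (measurable_cst c) (mA _)).
exact (measurable_funM (measurableT_comp (continuous_measurable_fun (@sqrt_continuous R)) mP)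
   (measurableT_comp measurable_inv mQ)).
Qed.
Lemma h_bounds (j c1 c2 s : R) : 0 <= j <= 1 -> 0 < c1 -> c1 <= c2 ->
  0 <= s <= Num.sqrt (1 - j ^+ 2) ->
  [/\ 0 <= c1 * Fc c1 j (c1 * s),
      c1 * Fc c1 j (c1 * s) <= c2 * Fc c2 j (c2 * s) &
      c2 * Fc c2 j (c2 * s) <= (c2 / c1) * (c1 * Fc c1 j (c1 * s))].
Proof.
move=> /andP[j0 j1] c10 c12 /andP[s0 st].
have c20 : 0 < c2 by apply: lt_le_trans c12.
rewrite !Fc_scale //.
have a0 : 0 <= 1 - j ^+ 2 by rewrite subr_ge0 exprn_ile1.
have s2 : s ^+ 2 <= 1 - j ^+ 2.
  have ht := sqr_sqrtr a0; move: (Num.sqrt _) st ht => t st <-.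
  nra.
set X := 1 - j ^+ 2 - s ^+ 2.
have X0 : 0 <= X by rewrite /X subr_ge0.
have Y0 : 0 <= 1 - s ^+ 2 by have := sqr_ge0 j; lra.
have XY : X <= 1 - s ^+ 2 by rewrite /X; have := sqr_ge0 j; lra.
move: (1 - s ^+ 2) Y0 XY => Y Y0 XY.
have Q0 (c : R) : 0 <= c ^+ 2 * Y + s ^+ 2 by rewrite addr_ge0 ?sqr_ge0 // mulr_ge0 // sqr_ge0.
split.
- by rewrite divr_ge0 ?sqrtr_ge0.
- rewrite ler_wpM2r ?invr_ge0 // ler_wsqrtr // ler_wpM2l // lerD2r ler_wpM2r //.
  nra.
- set k := c2 / c1.
  have k1 : 1 <= k by rewrite /k ler_pdivlMr // mul1r.
  have c2E : c2 = k * c1 by rewrite /k divfK // gt_eqF.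
  rewrite mulrA ler_wpM2r ?invr_ge0 //.
  have -> : k * Num.sqrt (X * (c1 ^+ 2 * Y + s ^+ 2))
      = Num.sqrt (k ^+ 2 * (X * (c1 ^+ 2 * Y + s ^+ 2))).
    by rewrite [RHS]sqrtrM ?sqr_ge0 // sqrtr_sqr ger0_norm // (le_trans ler01).
  rewrite ler_wsqrtr // c2E -subr_ge0.
  have -> : k ^+ 2 * (X * (c1 ^+ 2 * Y + s ^+ 2)) - X * ((k * c1) ^+ 2 * Y + s ^+ 2)
     = (k ^+ 2 - 1) * X * s ^+ 2 by ring.
  rewrite mulr_ge0 ?sqr_ge0 // mulr_ge0 // subr_ge0.
  nra.
Qed.
Lemma fine_mono (E1 E2 : \bar R) (K : R) : (0 <= E1)%E -> (E1 <= E2)%E ->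
  (E2 <= K%:E * E1)%E -> fine E1 <= fine E2.
Proof.
case: E1 => [r||] //; case: E2 => [q||] //=.
Qed.

Lemma part1 (j : R) : 0 <= j <= 1 ->
  forall c1 c2 : R, 0 < c1 -> c1 <= c2 -> gfun c1 j <= gfun c2 j.
Proof.
move=> hj c1 c2 c10 c12.
have c20 : 0 < c2 by apply: lt_le_trans c12.
set t := Num.sqrt (1 - j ^+ 2).
have t0 : 0 <= t by exact: sqrtr_ge0.
have Fpos (c s : R) : 0 < c -> 0 <= s <= t -> 0 <= Fc c j (c * s).
  move=> c0 hs; have [h0 _ _] := h_bounds _ _ _ _ hj c0 (lexx c) hs.
  by rewrite -(pmulr_rge0 _ c0).
have mG (c : R) : measurable_fun `[0%R, t]%classic (fun s : R => (c * Fc c j (c * s))%:E).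
  apply/measurable_EFinP; apply: measurable_funTS.
  exact (measurable_funM (measurable_cst c) (measurableT_comp (mFc c j) (mphi c))).
have G (c : R) : 0 < c ->
    gfun c j = 4 * fine (\int[mu]_(s in `[0%R, t]) ((c * Fc c j (c * s))%:E))%E.
  move=> c0; rewrite /gfun /Rintegral; congr (4 * fine _).
  have -> : (\int[mu]_(s in `[0%R, t]) ((c * Fc c j (c * s))%:E))%E =
            (c%:E * \int[mu]_(s in `[0%R, t]) ((Fc c j (c * s))%:E))%E.
    under eq_integral do rewrite EFinM.
    rewrite ge0_integralZl_EFin //; first by move=> x /=; rewrite in_itv /= lee_fin => /(Fpos c x c0).
    - apply/measurable_EFinP; apply: measurable_funTS.
      exact (measurableT_comp (mFc c j) (mphi c)).
    - exact: ltW.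
  rewrite -integral_scale //; first exact: mFc.
  move=> x /andP[x0 xt].
  have -> : x = c * (x / c) by rewrite mulrC divfK // gt_eqF.
  apply: Fpos => //; rewrite divr_ge0 ?(ltW c0) //=.
  by rewrite ler_pdivrMr // mulrC.
have itvP (x : R) : `[0%R, t]%classic x -> 0 <= x <= t by rewrite /= in_itv.
rewrite !G // ler_wpM2l //.
apply: (@fine_mono _ _ (c2 / c1)).
- apply: integral_ge0 => x /(itvP x) hx.
  have [h0 _ _] := h_bounds _ _ _ _ hj c10 (lexx c1) hx; by rewrite lee_fin.
- apply: ge0_le_integral.
  + by [].
  + move=> x /(itvP x) hx.
    have [h0 _ _] := h_bounds _ _ _ _ hj c10 (lexx c1) hx; by rewrite lee_fin.
  + exact: mG.
  + exact: mG.
  + move=> x /(itvP x) hx.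
    have [_ h1 _] := h_bounds _ _ _ _ hj c10 c12 hx; by rewrite lee_fin.
- rewrite -ge0_integralZl_EFin.
  + apply: ge0_le_integral.
    * by [].
    * move=> x /(itvP x) hx.
      have [h0 _ _] := h_bounds _ _ _ _ hj c20 (lexx c2) hx; by rewrite lee_fin.
    * exact: mG.
    * apply/measurable_EFinP; apply: measurable_funTS.
      exact (measurable_funM (measurable_cst (c2 / c1))
        (measurable_funM (measurable_cst c1) (measurableT_comp (mFc c1 j) (mphi c1)))).
    * move=> x /(itvP x) hx.
      have [_ _ h2] := h_bounds _ _ _ _ hj c10 c12 hx; by rewrite -EFinM lee_fin.
  + by [].
  + move=> x /(itvP x) hx.
    have [h0 _ _] := h_bounds _ _ _ _ hj c10 (lexx c1) hx; by rewrite lee_fin.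
  + exact: mG.
  + by rewrite divr_ge0 // ltW.
Qed.
End S.

Theorem mainTheorem13 (R : realType) :
  (forall j : R, 0 <= j <= 1 ->
     forall c1 c2 : R, 0 < c1 -> c1 <= c2 -> gfun c1 j <= gfun c2 j) /\
  (forall c1 c2 : R, 0 < c1 -> c1 < c2 -> XOmega (Omega c1) `<=` XOmega (Omega c2)).
Proof.
split; first exact: part1.
move=> c1 c2 c10 c12 z; rewrite /XOmega /Omega /=.
move=> [p1 [p2 [j [hj [t [t0 E]]]]]].
set jj := if 0 <= j then j else - j.
have hjj : 0 <= jj <= 1.
  rewrite /jj; case: ifPn => h; move: hj => /andP[h1 h2]; apply/andP; split => //; lra.
have d0 : 0 <= gfun c2 jj - gfun c1 jj.
  by rewrite subr_ge0; apply: part1 => //; exact: ltW.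
split => //; split => //; exists j; split => //.
exists (t + (gfun c2 jj - gfun c1 jj)); split; first lra.
rewrite E /curve /jj; case: ifP => _ /=; congr pair; ring.
Qed.
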